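(* Let $f,g,h\in\mathbb{K}[[X]][Y]$ be irreducible quasi-ordinary polynomials and $\omega\in\mathbb{R}_+^d$. Then $\mathrm{cont}_\omega(f,g)\ge\min\{\mathrm{cont}_\omega(f,h),\mathrm{cont}_\omega(h,g)\}$.
   Context: $\mathbb{K}$ is an algebraically closed field of characteristic zero, $\mathbb{K}[[X]]=\mathbb{K}[[X_1,\dots,X_d]]$. A monic polynomial in $\mathbb{K}[[X]][Y]$ is quasi-ordinary if its discriminant is $u(X)X^q$ with $u(0)\ne0$; its roots then lie in $\mathbb{K}[[X_1^{1/m},\dots,X_d^{1/m}]]$ for some $m$, and $\mathrm{Zer}$ denotes the set of roots. For a fractional power series $\alpha=\sum_a c_aX^a$ and $\omega\in\mathbb{R}_+^d$, $\mathrm{ord}_\omega(\alpha)=\min\{\langle\omega,a\rangle:c_a\ne0\}$ ($=+\infty$ if $\alpha=0$). The weighted contact is $\mathrm{cont}_\omega(f,g)=\frac{1}{\deg f\deg g}\sum_{\alpha\in\mathrm{Zer} f,\ \beta\in\mathrm{Zer} g}\mathrm{ord}_\omega(\alpha-\beta)$, which equals $\frac{1}{\deg f\deg g}\min\{\langle\omega,a\rangle: a\in\Delta(\mathrm{Res}(f,g))\}$, where $\Delta$ denotes the Newton polytope (convex hull of $\bigcup_{c_a\ne0}(a+\mathbb{R}^d_{\ge0})$). *)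

(* Defs.v *)
From HB Require Import structures.
From Stdlib Require Import ClassicalEpsilon FunctionalExtensionality.
From mathcomp Require Import all_boot all_order all_algebra.
Set Implicit Arguments. Unset Strict Implicit. Unset Printing Implicit Defensive.
Import Order.TTheory GRing.Theory Num.Theory.
Local Open Scope ring_scope.

(* Univariate formal power series  R[[T]]  over a commutative ring R,   *)
(* represented by their coefficient functions.                          *)
Definition PS (R : Type) := nat -> R.

Section PSeqChoice.
Variable R : Type.

Definition ps_eqb (f g : PS R) : bool :=
  if excluded_middle_informative (f = g) then true else false.

Lemma ps_eqP : Equality.axiom ps_eqb.
Proof.
move=> f g; rewrite /ps_eqb; case: excluded_middle_informative => H.
  by apply: ReflectT. by apply: ReflectF.
Qed.

HB.instance Definition _ := hasDecEq.Build (PS R) ps_eqP.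

Definition ps_find (P : pred (PS R)) (n : nat) : option (PS R) :=
  match excluded_middle_informative (exists x, P x) with
  | left H => Some (proj1_sig (constructive_indefinite_description _ H))
  | right _ => None
  end.

Lemma ps_find_some P n x : ps_find P n = Some x -> P x.
Proof.
rewrite /ps_find; case: excluded_middle_informative => // H [<-].
exact: proj2_sig (constructive_indefinite_description _ H).
Qed.

Lemma ps_find_ex (P : pred (PS R)) : (exists x, P x) -> exists n, ps_find P n.
Proof.
move=> H; exists 0%N; rewrite /ps_find; case: excluded_middle_informative => //.
Qed.

Lemma ps_find_ext (P Q : pred (PS R)) : P =1 Q -> ps_find P =1 ps_find Q.
Proof. by move=> /functional_extensionality PQ n; rewrite PQ. Qed.

HB.instance Definition _ := hasChoice.Build (PS R) ps_find_some ps_find_ex ps_find_ext.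
End PSeqChoice.

Section PSring.
Variable R : comNzRingType.

Definition ps0 : PS R := fun _ => 0.
Definition psopp (f : PS R) : PS R := fun n => - f n.
Definition psadd (f g : PS R) : PS R := fun n => f n + g n.

Lemma psaddA : associative psadd.
Proof. by move=> f g h; apply: functional_extensionality => n; rewrite /psadd addrA. Qed.
Lemma psaddC : commutative psadd.
Proof. by move=> f g; apply: functional_extensionality => n; rewrite /psadd addrC. Qed.
Lemma psadd0 : left_id ps0 psadd.
Proof. by move=> f; apply: functional_extensionality => n; rewrite /psadd /ps0 add0r. Qed.
Lemma psaddN : left_inverse ps0 psopp psadd.
Proof. by move=> f; apply: functional_extensionality => n; rewrite /psadd /psopp /ps0 addNr. Qed.

HB.instance Definition _ := GRing.isZmodule.Build (PS R) psaddA psaddC psadd0 psaddN.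

Definition pstr (n : nat) (f : PS R) : {poly R} := \poly_(i < n.+1) f i.

Definition psmul (f g : PS R) : PS R := fun n => (pstr n f * pstr n g)`_n.
Definition ps1 : PS R := fun n => if n == 0%N then 1 else 0.

Lemma coefM_agree (P P' Q Q' : {poly R}) n :
  (forall i, (i <= n)%N -> P`_i = P'`_i) -> (forall i, (i <= n)%N -> Q`_i = Q'`_i) ->
  (P * Q)`_n = (P' * Q')`_n.
Proof.
move=> HP HQ; rewrite !coefM; apply: eq_bigr => i _.
by rewrite HP ?HQ ?leq_subr // -ltnS.
Qed.

Lemma pstrE n f i : (i <= n)%N -> (pstr n f)`_i = f i.
Proof. by move=> H; rewrite /pstr coef_poly ltnS H. Qed.

Lemma psmulE f g n k : (k <= n)%N -> psmul f g k = (pstr n f * pstr n g)`_k.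
Proof.
move=> kn; rewrite /psmul; apply: coefM_agree => i ik;
  rewrite !pstrE //; exact: leq_trans ik kn.
Qed.

Lemma psmulA : associative psmul.
Proof.
move=> f g h; apply: functional_extensionality => n.
have -> : psmul f (psmul g h) n = (pstr n f * (pstr n g * pstr n h))`_n.
  rewrite {1}/psmul; apply: coefM_agree => // i H.
  by rewrite pstrE // (psmulE _ _ H).
have -> : psmul (psmul f g) h n = ((pstr n f * pstr n g) * pstr n h)`_n.
  rewrite {1}/psmul; apply: coefM_agree => // i H.
  by rewrite pstrE // (psmulE _ _ H).
by rewrite mulrA.
Qed.

Lemma psmulC : commutative psmul.
Proof. by move=> f g; apply: functional_extensionality => n; rewrite /psmul mulrC. Qed.

Lemma psmul1 : left_id ps1 psmul.
Proof.
move=> f; apply: functional_extensionality => n.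
have -> : psmul ps1 f n = (1 * pstr n f)`_n.
  rewrite /psmul; apply: coefM_agree => // i H.
  by rewrite pstrE // coefC /ps1.
by rewrite mul1r pstrE.
Qed.

Lemma psmulDl : left_distributive psmul psadd.
Proof.
move=> f g h; apply: functional_extensionality => n.
have -> : psmul (psadd f g) h n = ((pstr n f + pstr n g) * pstr n h)`_n.
  rewrite /psmul; apply: coefM_agree => // i H.
  by rewrite coefD !pstrE.
by rewrite mulrDl coefD.
Qed.

Lemma ps1_neq0 : ps1 != ps0.
Proof.
apply/eqP => /(congr1 (fun f : PS R => f 0%N)); rewrite /ps1 /ps0 /=.
by move/eqP; rewrite oner_eq0.
Qed.

HB.instance Definition _ := GRing.Zmodule_isComNzRing.Build (PS R)
  psmulA psmulC psmul1 psmulDl ps1_neq0.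
End PSring.

(* Multivariate power series  R[[X_1,...,X_d]] := R[[X_1]]...[[X_d]]   *)
(* (iterated; the outermost series variable is X_1).                   *)
Fixpoint mps (R : comNzRingType) (d : nat) : comNzRingType :=
  match d with
  | 0 => R
  | d'.+1 => (PS (mps R d') : comNzRingType)
  end.

(* coefficient of the monomial X^a, a = (a 0, ..., a (d-1)); entries of a *)
(* beyond index d-1 are ignored.                                          *)
Fixpoint mcoef (R : comNzRingType) (d : nat) : mps R d -> (nat -> nat) -> R :=
  match d with
  | 0 => fun s _ => s
  | d'.+1 => fun s a => @mcoef R d' ((s : PS (mps R d')) (a 0%N)) (fun i => a i.+1)
  end.

Fixpoint mmono (R : comNzRingType) (d : nat) : (nat -> nat) -> mps R d :=
  match d with
  | 0 => fun _ => 1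
  | d'.+1 => fun q => ((fun n => if n == q 0%N then @mmono R d' (fun i => q i.+1) else 0)
                        : PS (mps R d'))
  end.

(* The substitution X_i |-> T_i^m, identifying R[[X]] with the subring of    *)
(* R[[T]] = R[[X^(1/m)]] (T_i = X_i^(1/m)) of series in the X_i.           *)
Fixpoint mps_ram (R : comNzRingType) (m : nat) (d : nat) : mps R d -> mps R d :=
  match d with
  | 0 => fun s => s
  | d'.+1 => fun s => ((fun n => if (m %| n)%N then
                                   @mps_ram R m d' ((s : PS (mps R d')) (n %/ m)%N)
                                 else 0) : PS (mps R d'))
  end.

Definition poly_unit (S : comNzRingType) (p : {poly S}) := exists q, p * q = 1.

Definition poly_irreducible (S : comNzRingType) (p : {poly S}) :=
  ~ poly_unit p /\ forall q r : {poly S}, p = q * r -> poly_unit q \/ poly_unit r.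

Definition discr (S : comNzRingType) (p : {poly S}) : S :=
  (-1) ^+ 'C((size p).-1, 2) * resultant p p^`().

Definition quasi_ordinary (K : comNzRingType) (d : nat) (f : {poly mps K d}) :=
  f \is monic /\
  exists (u : mps K d) (q : nat -> nat),
    discr f = u * mmono K d q /\ mcoef u (fun _ => 0%N) != 0.

(* Weighted orders and weighted contact, values in R U {+oo}            *)
(* (None stands for +oo).                                              *)
Section Contact.
Variables (K : comNzRingType) (R : realFieldType) (d : nat) (w : 'I_d -> R).

Definition wpair (a : nat -> nat) : R := \sum_(i < d) w i * (a i)%:R.

Definition is_ord_min (s : mps K d) (r : R) :=
  (exists a, mcoef s a != 0 /\ wpair a = r) /\
  (forall a, mcoef s a != 0 -> r <= wpair a).

(* ord_w of a series in R[[T]] (T = X^(1/m)), measured in the T-exponents *)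
Definition ordT (s : mps K d) : option R :=
  match excluded_middle_informative (exists r, is_ord_min s r) with
  | left H => Some (proj1_sig (constructive_indefinite_description _ H))
  | right _ => None
  end.

Definition eadd (x y : option R) : option R :=
  match x, y with Some a, Some b => Some (a + b) | _, _ => None end.
Definition escale (c : R) (x : option R) : option R :=
  match x with Some a => Some (c * a) | None => None end.
Definition emin (x y : option R) : option R :=
  match x, y with
  | Some a, Some b => Some (Num.min a b)
  | Some a, None => Some a
  | None, y => y
  end.
Definition ele (x y : option R) : bool :=
  match x, y with
  | _, None => true
  | None, Some _ => false
  | Some a, Some b => a <= b
  end.

(* cont_w(f,g) computed from the root lists rf, rg of f, g in             *)
(* R[[X^(1/m)]] = R[[T]]; ord_w(alpha) = ordT(alpha) / m.                   *)
Definition cont (m : nat) (rf rg : seq (mps K d)) : option R :=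
  escale ((m * size rf * size rg)%:R)^-1
    (foldr eadd (Some 0) [seq ordT (x - y) | x <- rf, y <- rg]).

End Contact.

(* f splits in R[[X^(1/m)]][Y] with (multi)set of roots rf *)
Definition splits_with (K : comNzRingType) (d m : nat) (f : {poly mps K d})
    (rf : seq (mps K d)) :=
  map_poly (@mps_ram K m d) f = \prod_(a <- rf) ('X - a%:P).

(* Main.v *)
Require Import Defs.
From HB Require Import structures.
From Stdlib Require Import ClassicalEpsilon FunctionalExtensionality List.
From mathcomp Require Import all_boot all_order all_algebra all_field zify.
From mathcomp Require cyclic.
Set Implicit Arguments. Unset Strict Implicit. Unset Printing Implicit Defensive.
Import Order.TTheory GRing.Theory Num.Theory.
Local Open Scope ring_scope.


Section PSfacts.
Variable R : comNzRingType.
Implicit Types f g : PS R.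

Lemma psD f g n : (f + g : PS R) n = f n + g n. Proof. by []. Qed.
Lemma ps0E n : (0 : PS R) n = 0. Proof. by []. Qed.
Lemma psN f n : (- f : PS R) n = - f n. Proof. by []. Qed.
Lemma psB f g n : (f - g : PS R) n = f n - g n. Proof. by []. Qed.
Lemma ps1E n : (1 : PS R) n = if n == 0%N then 1 else 0. Proof. by []. Qed.
Lemma psM f g n : (f * g : PS R) n = \sum_(i < n.+1) f i * g (n - i)%N.
Proof.
change ((pstr n f * pstr n g)`_n = \sum_(i < n.+1) f i * g (n - i)%N); rewrite coefM; apply: eq_bigr => i _.
by rewrite !pstrE // ?leq_subr // -ltnS.
Qed.
Lemma ps_ext f g : (forall n, f n = g n) -> f = g.
Proof. by move=> H; apply: functional_extensionality. Qed.
End PSfacts.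

Definition shift (a : nat -> nat) := fun i => a i.+1.

Section Mco.
Variable K : comNzRingType.

Lemma mcoefS d (s : mps K d.+1) a :
  mcoef s a = mcoef ((s : PS (mps K d)) (a 0%N)) (shift a).
Proof. by []. Qed.

Lemma mcoefD d (s t : mps K d) a : mcoef (s + t) a = mcoef s a + mcoef t a.
Proof. elim: d s t a => [//|d IH] s t a; by rewrite !mcoefS IH. Qed.
Lemma mcoef0 d a : mcoef (0 : mps K d) a = 0.
Proof. elim: d a => [//|d IH] a; by rewrite mcoefS IH. Qed.
Lemma mcoefN d (s : mps K d) a : mcoef (- s) a = - mcoef s a.
Proof. elim: d s a => [//|d IH] s a; by rewrite !mcoefS IH. Qed.
Lemma mcoefB d (s t : mps K d) a : mcoef (s - t) a = mcoef s a - mcoef t a.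
Proof. by rewrite mcoefD mcoefN. Qed.

Lemma mcoef_ext d (s t : mps K d) : (forall a, mcoef s a = mcoef t a) -> s = t.
Proof.
elim: d s t => [|d IH] s t H; first exact: (H (fun _ => 0%N)).
apply: ps_ext => n; apply: IH => b.
have := H (fun i => if i is i'.+1 then b i' else n).
by rewrite mcoefS.
Qed.

Lemma mcoef_eq d (s : mps K d) a b : (forall i, (i < d)%N -> a i = b i) ->
  mcoef s a = mcoef s b.
Proof.
elim: d s a b => [//|d IH] s a b H; rewrite !mcoefS H //.
by apply: IH => i Hi; apply: H.
Qed.

Fixpoint mk d : ((nat -> nat) -> K) -> mps K d :=
  match d with
  | 0 => fun F => F (fun _ => 0%N)
  | d'.+1 => fun F => ((fun n => @mk d' (fun b => F (fun i => if i is i'.+1 then b i' else n))) : PS (mps K d'))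
  end.

Lemma mcoef_mk d F a : (forall a b, (forall i, (i < d)%N -> a i = b i) -> F a = F b) ->
  mcoef (mk d F) a = F a.
Proof.
elim: d F a => [|d IH] F a HF; first by apply: HF.
rewrite mcoefS /= IH; first by apply: HF => -[|i].
by move=> b c Hbc; apply: HF => -[|i] //= /Hbc.
Qed.
End Mco.

Lemma ps_nz (R : comNzRingType) (s : PS R) : s <> 0 -> exists n, s n != 0.
Proof.
move=> H; apply: NNPP => H'; apply: H; apply: ps_ext => n; rewrite ps0E.
by apply/eqP; apply: negbNE; apply/negP => Hn; apply: H'; exists n.
Qed.

Lemma mps_dom (K : idomainType) d (s t : mps K d) : s * t = 0 -> s = 0 \/ t = 0.
Proof.
elim: d s t => [|d IH] s t.
  by move/eqP; rewrite mulf_eq0 => /orP[/eqP|/eqP]; [left|right].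
move=> Hst; apply: NNPP => /Classical_Prop.not_or_and [Hs Ht].
have [ns Hns] := ps_nz Hs; have [nt Hnt] := ps_nz Ht.
case: (ex_minnP (ex_intro (fun n => (s : PS (mps K d)) n != 0) ns Hns)) => i Hi Hmi.
case: (ex_minnP (ex_intro (fun n => (t : PS (mps K d)) n != 0) nt Hnt)) => j Hj Hmj.
have := congr1 (fun f : PS (mps K d) => f (i + j)%N) Hst; rewrite /= psM ps0E.
have iord : (i < (i + j).+1)%N by rewrite ltnS leq_addr.
rewrite (bigD1 (Ordinal iord)) //= big1 ?addr0.
  rewrite addKn => /IH [] /eqP; by [rewrite (negbTE Hi) | rewrite (negbTE Hj)].
move=> k /eqP Hk; case: (ltngtP k i) => Hki.
- have : (s : PS (mps K d)) k == 0.
    by apply: negbNE; apply/negP => /Hmi; rewrite leqNgt Hki.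
  by move/eqP->; rewrite mul0r.
- have : (t : PS (mps K d)) (i + j - k)%N == 0.
    apply: negbNE; apply/negP => /Hmj; rewrite leqNgt.
    by move/negP; apply; rewrite ltn_subLR ?ltn_add2r // ; rewrite -ltnS; case: k Hk Hki => /= k kl _ _.
  by move/eqP->; rewrite mulr0.
- by exfalso; apply: Hk; apply: val_inj.
Qed.

Fixpoint sgm (K : comNzRingType) (z : K) d : K -> (nat -> nat) -> mps K d -> mps K d :=
  match d with
  | 0 => fun c e s => c * s
  | d'.+1 => fun c e s => ((fun n => @sgm K z d' (c * z ^+ (e 0%N * n)) (shift e)
                                         ((s : PS (mps K d')) n)) : PS (mps K d'))
  end.

Definition ep d (e a : nat -> nat) := (\sum_(i < d) e i * a i)%N.

Section Sig.
Variables (K : comNzRingType) (z : K).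

Lemma epS d e a : ep d.+1 e a = (e 0%N * a 0%N + ep d (shift e) (shift a))%N.
Proof. by rewrite /ep big_ord_recl. Qed.

Lemma mcoef_sgm d c e (s : mps K d) a :
  mcoef (sgm z c e s) a = c * z ^+ ep d e a * mcoef s a.
Proof.
elim: d c e s a => [|d IH] c e s a; first by rewrite /ep big_ord0 expr0 mulr1.
by rewrite mcoefS /= IH epS exprD mulrA.
Qed.

Lemma sgmD d c e (s t : mps K d) : sgm z c e (s + t) = sgm z c e s + sgm z c e t.
Proof. by apply: mcoef_ext => a; rewrite mcoefD !mcoef_sgm mcoefD mulrDr. Qed.
Lemma sgm0 d c e : sgm z c e (0 : mps K d) = 0.
Proof. by apply: mcoef_ext => a; rewrite mcoef0 !mcoef_sgm mcoef0 mulr0. Qed.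
Lemma sgmN d c e (s : mps K d) : sgm z c e (- s) = - sgm z c e s.
Proof. by apply: mcoef_ext => a; rewrite mcoefN !mcoef_sgm mcoefN mulrN. Qed.
Lemma sgm_sum d c e I (r : seq I) (F : I -> mps K d) :
  sgm z c e (\sum_(i <- r) F i) = \sum_(i <- r) sgm z c e (F i).
Proof. by apply: (big_morph _ (sgmD c e) (sgm0 _ c e)). Qed.

Lemma sgmM d c c' e (s t : mps K d) :
  sgm z (c * c') e (s * t) = sgm z c e s * sgm z c' e t.
Proof.
elim: d c c' e s t => [|d IH] c c' e s t; first by rewrite /= mulrACA.
apply: ps_ext => n; rewrite psM /= psM sgm_sum; apply: eq_bigr => i _.
rewrite -IH; congr sgm; rewrite mulrACA -exprD -mulnDr subnKC //.
by rewrite -ltnS.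
Qed.

Lemma sgm1 d e : sgm z 1 e (1 : mps K d) = 1.
Proof.
elim: d e => [|d IH] e; first by rewrite /= mulr1.
apply: ps_ext => n; rewrite /= ps1E; case: eqP => [->|_].
  by rewrite muln0 expr0 mulr1 IH.
by rewrite sgm0.
Qed.
End Sig.

Lemma sum_mult (R : nmodType) (m : nat) (m_gt0 : (0 < m)%N) (F : nat -> R) k :
  \sum_(i < (k * m).+1) (if (m %| i)%N then F i else 0) = \sum_(j < k.+1) F (j * m)%N.
Proof.
rewrite -(big_mkord xpredT (fun i => if (m %| i)%N then F i else 0)) -(big_mkord xpredT (fun j => F (j * m)%N)).
elim: k => [|k IH]; first by rewrite !big_nat1 dvdn0.
rewrite (big_cat_nat _ (n := (k * m).+1)) //=; last first.
  by rewrite ltnS leq_pmul2r // leqnSn.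
rewrite IH [in RHS]big_nat_recr //=; congr (_ + _).
have Hle : ((k * m).+1 <= k.+1 * m)%N by rewrite mulSn; lia.

rewrite big_nat_recr //= dvdn_mull // big1_seq ?add0r //.
move=> i /andP [_]; rewrite mem_index_iota => /andP [Hi1 Hi2].
case: ifP => // /dvdnP [q Hq]; exfalso.
move: Hi1 Hi2; rewrite Hq => H1 H2.
have h1 : (k < q)%N by rewrite -(ltn_pmul2r m_gt0).
have h2 : (q < k.+1)%N by rewrite -(ltn_pmul2r m_gt0).
lia.
Qed.

Fixpoint divall (m d : nat) (a : nat -> nat) : bool :=
  match d with 0 => true | d'.+1 => ((m %| a 0%N)%N) && divall m d' (shift a) end.

Section Ram.
Variables (K : comNzRingType) (m : nat).
Hypothesis m_gt0 : (0 < m)%N.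
Notation ram d := (@mps_ram K m d).

Lemma mcoef_ram d (s : mps K d) a :
  mcoef (ram d s) a = if divall m d a then mcoef s (fun i => a i %/ m)%N else 0.
Proof.
elim: d s a => [//|d IH] s a; rewrite mcoefS /=.
case: ifP => Hd /=; last by rewrite mcoef0.
by rewrite IH.
Qed.

Lemma ramD d (s t : mps K d) : ram d (s + t) = ram d s + ram d t.
Proof.
apply: mcoef_ext => a; rewrite mcoefD !mcoef_ram.
by case: ifP; rewrite ?mcoefD ?addr0.
Qed.
Lemma ram0 d : ram d 0 = 0.
Proof. by apply: mcoef_ext => a; rewrite !mcoef_ram !mcoef0; case: ifP. Qed.
Lemma ramN d (s : mps K d) : ram d (- s) = - ram d s.
Proof. by apply: mcoef_ext => a; rewrite mcoefN !mcoef_ram mcoefN; case: ifP; rewrite ?oppr0. Qed.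
Lemma ram_sum d I (r : seq I) (F : I -> mps K d) :
  ram d (\sum_(i <- r) F i) = \sum_(i <- r) ram d (F i).
Proof. by apply: (big_morph _ (@ramD d) (ram0 d)). Qed.


Lemma ram1 d : ram d 1 = 1.
Proof.
elim: d => [//|d IH]; apply: ps_ext => n /=; rewrite ps1E.
case: n => [|n]; first by rewrite dvdn0 div0n ps1E IH.
case: ifP => // Hd; rewrite ps1E.
have H : (0 < n.+1 %/ m)%N by rewrite divn_gt0 //; apply: dvdn_leq.
by rewrite (negbTE (lt0n_neq0 H)) ram0.
Qed.

Lemma ramM d (s t : mps K d) : ram d (s * t) = ram d s * ram d t.
Proof.
elim: d s t => [//|d IH] s t.
apply: ps_ext => n; rewrite psM /=.
case: ifP => Hn.
  case/dvdnP: Hn => k ->; rewrite mulnK // psM ram_sum.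
  pose G i := @mps_ram K m d ((s : PS _) (i %/ m)%N) * @mps_ram K m d ((t : PS _) ((k * m - i) %/ m)%N).
  rewrite [RHS](eq_bigr (fun i : 'I__ => if (m %| i)%N then G i else 0)); last first.
    move=> -[i Hi] _ /=; case: ifP => Hmi; last by rewrite mul0r.
    by rewrite dvdn_sub ?dvdn_mull.
  rewrite sum_mult //; apply: eq_bigr => j _; rewrite /G IH mulnK // -mulnBl mulnK //.
rewrite big1 // => -[i Hi] _ /=; case: ifP => Hmi; last by rewrite mul0r.
case: ifP => Hmi2; last by rewrite mulr0.
exfalso; move: Hn; rewrite -(subnKC (n := n) (m := i)) ?dvdn_add //.
Qed.
End Ram.

Lemma divallP m d a : reflect (forall i, (i < d)%N -> (m %| a i)%N) (divall m d a).
Proof.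
elim: d a => [|d IH] a /=; first by apply: ReflectT.
apply: (iffP andP) => [[H0 /IH H] [|i] //= Hi|H]; first by apply: H.
by split; [apply: H | apply/IH => i Hi; apply: H].
Qed.

Section Descent.
Variables (K : idomainType) (m : nat) (z : K).
Hypothesis m_gt0 : (0 < m)%N.
Hypothesis z_prim : m.-primitive_root z.

Lemma mcoef_ram_mul d (s : mps K d) b :
  mcoef (@mps_ram K m d s) (fun i => m * b i)%N = mcoef s b.
Proof.
rewrite mcoef_ram; case: divallP => [_|[]]; last by move=> i _; apply: dvdn_mulr.
by apply: mcoef_eq => i _; rewrite mulKn.
Qed.

Lemma ram_inj d (s t : mps K d) : @mps_ram K m d s = @mps_ram K m d t -> s = t.
Proof. by move=> H; apply: mcoef_ext => b; rewrite -!(mcoef_ram_mul _ b) H. Qed.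

Definition desc d (s : mps K d) : mps K d := mk d (fun b => mcoef s (fun i => m * b i)%N).

Definition inv_all d (s : mps K d) := forall e, sgm z 1 e s = s.

Lemma ep_ind d j a : (j < d)%N -> ep d (fun i => (i == j) : nat) a = a j.
Proof.
move=> jd; rewrite /ep (bigD1 (Ordinal jd)) //= eqxx mul1n big1 ?addn0 //.
by move=> i /eqP Hi; case: eqP => // Hij; exfalso; apply: Hi; apply: val_inj.
Qed.

Lemma descK d (s : mps K d) : inv_all s -> @mps_ram K m d (desc s) = s.
Proof.
move=> Hs; apply: mcoef_ext => a; rewrite mcoef_ram.
case: divallP => [Hd|Hnd].
  rewrite /desc mcoef_mk; last by move=> b c Hbc; apply: mcoef_eq => i /Hbc ->.
  by apply: mcoef_eq => i /Hd Hi; rewrite mulnC divnK.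
have [j [jd Hj]] : exists j, (j < d)%N /\ ~~ (m %| a j)%N.
  apply: NNPP => H; apply: Hnd => i Hi; apply: negbNE; apply/negP => Hn.
  by apply: H; exists i.
have := congr1 (fun s => mcoef s a) (Hs (fun i => (i == j) : nat)).
rewrite /= mcoef_sgm mul1r ep_ind // => /eqP.
rewrite -subr_eq0 -{2}[mcoef s a]mul1r -mulrBl mulf_eq0 subr_eq0.
by rewrite -(prim_order_dvd z_prim) (negbTE Hj) /= => /eqP.
Qed.

Lemma ram_inv d (s : mps K d) e : sgm z 1 e (@mps_ram K m d s) = @mps_ram K m d s.
Proof.
apply: mcoef_ext => a; rewrite mcoef_sgm mul1r mcoef_ram.
case: divallP => [Hd|_]; last by rewrite mulr0.
suff -> : z ^+ ep d e a = 1 by rewrite mul1r.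
apply/eqP; rewrite -(prim_order_dvd z_prim) /ep.
by apply: dvdn_sum => i _; apply: dvdn_mull; apply: Hd.
Qed.
End Descent.

Section Morph.
Variables (K : comNzRingType) (z : K) (d : nat) (e : nat -> nat).
Definition sg : mps K d -> mps K d := sgm z 1 e.
Lemma sg_zmod : zmod_morphism sg.
Proof. by move=> x y; rewrite /sg sgmD sgmN. Qed.
Lemma sg_monoid : monoid_morphism sg.
Proof. by split; [apply: sgm1 | move=> x y; rewrite /sg -sgmM mulr1]. Qed.
HB.instance Definition _ := GRing.isZmodMorphism.Build _ _ sg sg_zmod.
HB.instance Definition _ := GRing.isMonoidMorphism.Build _ _ sg sg_monoid.
End Morph.

Section RamMorph.
Variables (K : comNzRingType) (n : nat) (d : nat).
Definition ramf : mps K d -> mps K d := @mps_ram K n.+1 d.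
Lemma ram_zmod : zmod_morphism ramf.
Proof. by move=> x y; rewrite /ramf ramD // ramN. Qed.
Lemma ram_monoid : monoid_morphism ramf.
Proof. by split; [apply: ram1 | move=> x y; rewrite /ramf ramM]. Qed.
HB.instance Definition _ := GRing.isZmodMorphism.Build _ _ ramf ram_zmod.
HB.instance Definition _ := GRing.isMonoidMorphism.Build _ _ ramf ram_monoid.
End RamMorph.

Section PolyDom.
Variables (K : idomainType) (d : nat).
Local Notation M := (mps K d).

Lemma prod0_mem (s : seq M) (a : M) : \prod_(b <- s) (a - b) = 0 -> a \in s.
Proof.
elim: s => [|b s IH]; first by rewrite big_nil => /eqP; rewrite oner_eq0.
rewrite big_cons => /mps_dom [/eqP|/IH]; rewrite ?subr_eq0 => H; rewrite inE ?H ?orbT //.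
Qed.

Lemma prodX_perm (s t : seq M) :
  \prod_(a <- s) ('X - a%:P) = \prod_(a <- t) ('X - a%:P) -> perm_eq s t.
Proof.
elim: s t => [|a s IH] t.
  rewrite big_nil => H; have := congr1 (fun p : {poly M} => size p) H; rewrite /= size_poly1 size_prod_XsubC.
  by move/eqP; rewrite eqSS eq_sym size_eq0 => /eqP ->.
rewrite big_cons => H.
have aint : a \in t.
  apply: prod0_mem; have := congr1 (fun p => p.[a]) H.
  by rewrite /= hornerM hornerXsubC subrr mul0r horner_prod => ->; apply: eq_bigr => b _; rewrite hornerXsubC.
rewrite (perm_big _ (perm_to_rem aint)) big_cons in H.
have := monic_lreg (monicXsubC a) H => /IH.
rewrite -(perm_cons a) => Hs; apply: perm_trans Hs _.
by rewrite perm_sym perm_to_rem.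
Qed.
End PolyDom.

Lemma prodX_unit (R : nzRingType) (s : seq R) (u : {poly R}) :
  \prod_(a <- s) ('X - a%:P) * u = 1 -> s = [::].
Proof.
move=> H; have u0 : u != 0 by apply/eqP => u0; move: H; rewrite u0 mulr0 => /eqP; rewrite eq_sym oner_eq0.
have := congr1 (fun p : {poly R} => size p) H; rewrite /= size_monicM ?monic_prod_XsubC // size_prod_XsubC size_poly1.
rewrite -size_poly_gt0 in u0; case: s {H} => // a s /=.
by case: (size u) u0 => // n _; rewrite addSn addnS.
Qed.

Section Const.
Variables (K : idomainType) (n : nat) (z : K) (d : nat).
Local Notation m := n.+1.
Hypothesis z_prim : m.-primitive_root z.
Local Notation M := (mps K d).
Local Notation ramM := (@ramf K n d).

Lemma desc0 : @desc K m d (0 : M) = 0.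
Proof.
apply: mcoef_ext => a; rewrite mcoef0 /desc mcoef_mk ?mcoef0 //.
by move=> b c _; rewrite !mcoef0.
Qed.

Lemma sg_fix_ram (F : {poly M}) e : map_poly (@sg K z d e) (map_poly ramM F) = map_poly ramM F.
Proof. by apply/polyP => i; rewrite !coef_map /= /sg /ramf (ram_inv z_prim). Qed.

Lemma perm_sg (F : {poly M}) rF e :
  map_poly ramM F = \prod_(a <- rF) ('X - a%:P) -> perm_eq (map (@sg K z d e) rF) rF.
Proof.
move=> Fs; apply: prodX_perm; rewrite big_map -(map_prod_XsubC (@sg K z d e)) -Fs.
by rewrite sg_fix_ram.
Qed.

Lemma poly_desc (P : {poly M}) : (forall e, map_poly (@sg K z d e) P = P) ->
  map_poly ramM (map_poly (@desc K m d) P) = P.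
Proof.
move=> HP; apply/polyP => i; rewrite coef_map /= coef_map_id0 ?desc0 //.
rewrite /ramf (descK z_prim) //= => e.
by have := congr1 (fun p : {poly M} => p`_i) (HP e); rewrite /= coef_map.
Qed.

Lemma const_on (T : eqType) (F : {poly M}) rF (Firr : poly_irreducible F)
   (Fs : map_poly ramM F = \prod_(a <- rF) ('X - a%:P))
   (phi : M -> T) (phiI : forall e x, phi (@sg K z d e x) = phi x) x y :
   x \in rF -> y \in rF -> phi x = phi y.
Proof.
move=> xr yr; pose p a := phi a == phi x.
pose P := \prod_(a <- rF | p a) ('X - a%:P).
pose Q := \prod_(a <- rF | ~~ p a) ('X - a%:P).
have HF : map_poly ramM F = P * Q by rewrite Fs (bigID p).
have inv : forall (q : pred M), (forall e a, q (@sg K z d e a) = q a) -> forall e,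
   map_poly (@sg K z d e) (\prod_(a <- rF | q a) ('X - a%:P)) = \prod_(a <- rF | q a) ('X - a%:P).
  move=> q Hq e; rewrite map_prod_XsubC [RHS](perm_big (map (@sg K z d e) rF)); last first.
    by rewrite perm_sym (perm_sg e Fs).
  by rewrite big_map; apply: eq_bigl => a; rewrite Hq.
have Hp : forall e a, p (@sg K z d e a) = p a by move=> e a; rewrite /p phiI.
have Hnp : forall e a, ~~ p (@sg K z d e a) = ~~ p a by move=> e a; rewrite Hp.
have HP := poly_desc (inv p Hp).
have HQ := poly_desc (inv (fun a => ~~ p a) Hnp).
have FPQ : F = map_poly (@desc K m d) P * map_poly (@desc K m d) Q.
  apply: (map_inj_poly (f := ramM)); first by move=> s t; apply: ram_inj.
    by rewrite raddf0.
  by rewrite rmorphM /= HP HQ HF.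
case: Firr => _ /(_ _ _ FPQ) [] [u Hu].
  have := congr1 (map_poly ramM) Hu; rewrite rmorphM rmorph1 /= HP /P -big_filter.
  move/prodX_unit => H; have : x \in filter p rF by rewrite mem_filter /p eqxx xr.
  by rewrite H.
have := congr1 (map_poly ramM) Hu; rewrite rmorphM rmorph1 /= HQ /Q -big_filter.
move/prodX_unit => H; apply/eqP; apply: negbNE; apply/negP => Hy.
have : y \in filter (fun a => ~~ p a) rF by rewrite mem_filter /p eq_sym Hy yr.
by rewrite H.
Qed.
End Const.


Definition cons_f (h : nat) (b : nat -> nat) : nat -> nat :=
  fun i => if i is i'.+1 then b i' else h.
Definition shiftf (a : nat -> nat) := fun i => a i.+1.

Lemma cons_shift a : cons_f (a 0%N) (shiftf a) = a.
Proof. by apply: functional_extensionality => -[]. Qed.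

Definition dom d (c a : nat -> nat) := forall i, (i < d)%N -> (c i <= a i)%N.

Lemma dickson d (P : (nat -> nat) -> Prop) : (exists a, P a) ->
  exists F : list (nat -> nat), F <> nil /\ (forall c, In c F -> P c) /\
    (forall a, P a -> exists c, In c F /\ dom d c a).
Proof.
elim: d P => [|d IH] P [a0 Pa0].
  by exists (a0 :: nil); split=> //; split=> [c [<-|[]] //|a _]; exists a0; split=> //; left.
pose P' b := exists h, P (cons_f h b).
have [F' [F'n [F'P F'd]]] : exists F' : list (nat -> nat), F' <> nil /\ (forall c, In c F' -> P' c) /\
    (forall a, P' a -> exists c, In c F' /\ dom d c a).
  by apply: IH; exists (shiftf a0), (a0 0%N); rewrite cons_shift.
have [L [LP [Lc [M LM]]]] : exists L : list (nat -> nat), (forall c, In c L -> P c) /\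
   (forall b, In b F' -> exists c, In c L /\ shiftf c = b) /\
   exists M, forall c, In c L -> (c 0%N <= M)%N.
  elim: F' {F'n F'd} F'P => [|b F' IHF] HF.
    by exists nil; split=> //; split=> //; exists 0%N.
  have [L [LP [Lc [M LM]]]] := IHF (fun c Hc => HF c (or_intror Hc)).
  have [h Ph] := HF b (or_introl erefl).
  exists (cons_f h b :: L); split; first by move=> c [<-|/LP].
  split; first by move=> b' [<-|/Lc [c [Hc Hcb]]]; [exists (cons_f h b); split; [left|] | exists c; split; [right|]].
  exists (maxn h M) => c [<-|/LM Hc] /=; first exact: leq_maxl.
  by apply: leq_trans Hc (leq_maxr _ _).
have HG : forall N, exists G : list (nat -> nat), (forall c, In c G -> P c) /\
    (forall a, P a -> (a 0%N < N)%N -> exists c, In c G /\ dom d.+1 c a).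
  elim=> [|N [G [GP Gd]]]; first by exists nil; split=> // a _.
  case: (classic (exists b, P (cons_f N b))) => [Hex|Hnex].
    have [FN [_ [FNP FNd]]] := IH (fun b => P (cons_f N b)) Hex.
    exists (List.app G (List.map (cons_f N) FN)); split.
      move=> c H0; case: (in_app_or _ _ _ H0) => H; first exact: GP.
      by case: (proj1 (in_map_iff _ _ _) H) => b [<- Hb]; apply: FNP.
    move=> a Pa; rewrite ltnS leq_eqVlt => /orP [/eqP Ha|Ha]; last first.
      by have [c [Hc Hd]] := Gd a Pa Ha; exists c; split=> //; apply: in_or_app; left.
    have := FNd (shiftf a); rewrite -Ha cons_shift => /(_ Pa) [b [Hb Hd]].
    exists (cons_f (a 0%N) b); split; first by apply: in_or_app; right; apply: List.in_map.
    by move=> [|i] /= //; rewrite ltnS => /Hd.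
  exists G; split=> // a Pa; rewrite ltnS leq_eqVlt => /orP [/eqP Ha|]; last exact: Gd.
  by exfalso; apply: Hnex; exists (shiftf a); rewrite -Ha cons_shift.
have [G [GP Gd]] := HG M.+1.
exists (List.app L G); split.
  case: F' F'n Lc {F'P F'd} => [//|b F' _ Lc]; have [c [Hc _]] := Lc b (or_introl erefl).
  by case: L Hc {LP LM} Lc => [[]|].
split; first by move=> c H0; case: (in_app_or _ _ _ H0) => H; [apply: LP | apply: GP].
move=> a Pa; case: (ltnP (a 0%N) M.+1) => Ha.
  by have [c [Hc Hd]] := Gd a Pa Ha; exists c; split=> //; apply: in_or_app; right.
have [b [Hb Hd]] := F'd (shiftf a) (ex_intro _ (a 0%N) (eq_ind_r P Pa (cons_shift a))).
have [c [Hc Hcb]] := Lc b Hb; exists c; split; first by apply: in_or_app; left.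
move=> [|i] /= Hi; first by apply: leq_trans (LM c Hc) (ltnW Ha).
by rewrite -[c i.+1]/(shiftf c i) Hcb; apply: Hd.
Qed.

Section Ord.
Variables (K : comNzRingType) (R : realFieldType) (d : nat) (w : 'I_d -> R).
Hypothesis w_ge0 : forall i, 0 <= w i.
Local Notation M := (mps K d).
Local Notation wp := (wpair w).
Local Notation ord := (@ordT K R d w).

Lemma wp_mono c a : dom d c a -> wp c <= wp a.
Proof.
move=> H; rewrite /wpair; apply: ler_sum => i _; apply: ler_wpM2l => //.
by rewrite ler_nat; apply: H.
Qed.

Lemma list_min (F : list (nat -> nat)) : F <> nil ->
  exists c, In c F /\ forall c', In c' F -> wp c <= wp c'.
Proof.
elim: F => [//|a F IH] _; case: F IH => [|b F] IH.
  by exists a; split; [left|move=> c' [<-|[]]].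
have [c [Hc Hm]] := IH (fun H => @nil_cons _ b F (esym H)).
case: (lerP (wp a) (wp c)) => Hac.
  exists a; split; first by left.
  by move=> c' [<-//|/Hm]; apply: le_trans.
exists c; split; first by right.
by move=> c' [<-|/Hm //]; apply: ltW.
Qed.

Lemma ord_min_uniq (s : M) r r' : is_ord_min w s r -> is_ord_min w s r' -> r = r'.
Proof.
move=> [[a [Ha <-]] H1] [[b [Hb <-]] H2]; apply/eqP; rewrite eq_le.
by rewrite H1 // H2.
Qed.

Lemma ordT_Some (s : M) r : is_ord_min w s r -> ord s = Some r.
Proof.
move=> H; rewrite /ordT; case: excluded_middle_informative => [H'|[]]; last by exists r.
congr Some; apply: ord_min_uniq (H) => //.
exact: proj2_sig (constructive_indefinite_description _ H').
Qed.

Lemma ordT_spec (s : M) r : ord s = Some r -> is_ord_min w s r.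
Proof.
rewrite /ordT; case: excluded_middle_informative => // H [<-].
exact: proj2_sig (constructive_indefinite_description _ H).
Qed.

Lemma ordT0 : ord 0 = None.
Proof.
rewrite /ordT; case: excluded_middle_informative => [H|//]; exfalso.
by case: H => r [[a [Ha _]] _]; move: Ha; rewrite mcoef0 eqxx.
Qed.

Lemma ordT_nz (s : M) : s <> 0 -> exists r, ord s = Some r /\ is_ord_min w s r.
Proof.
move=> s0.
have [a Ha] : exists a, mcoef s a != 0.
  apply: NNPP => H; apply: s0; apply: mcoef_ext => a; rewrite mcoef0.
  by apply/eqP; apply: negbNE; apply/negP => Ha; apply: H; exists a.
have [F [Fn [FP Fd]]] := dickson d (ex_intro (fun a => mcoef s a != 0) a Ha).
have [c [Hc Hm]] := list_min Fn.
have Hmin : is_ord_min w s (wp c).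
  split; first by exists c; split=> //; apply: FP.
  move=> b Hb; have [c' [Hc' Hd]] := Fd b Hb.
  by apply: le_trans (Hm _ Hc') (wp_mono Hd).
by exists (wp c); split=> //; apply: ordT_Some.
Qed.

Lemma ordT_supp (s t : M) : (forall a, (mcoef s a != 0) = (mcoef t a != 0)) -> ord s = ord t.
Proof.
move=> H.
have Hst : forall r, is_ord_min w s r -> is_ord_min w t r.
  move=> r [[a [Ha Hr]] Hm]; split; first by exists a; rewrite -H.
  by move=> b; rewrite -H; apply: Hm.
have Hts : forall r, is_ord_min w t r -> is_ord_min w s r.
  move=> r [[a [Ha Hr]] Hm]; split; first by exists a; rewrite H.
  by move=> b; rewrite H; apply: Hm.
case Es: (ord s) => [r|].
  by rewrite (ordT_Some (Hst _ (ordT_spec Es))).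
case Et: (ord t) => [r|] //.
by rewrite (ordT_Some (Hts _ (ordT_spec Et))) in Es.
Qed.
End Ord.

Section Opt.
Variable R : realFieldType.
Implicit Types u v t : option R.

Definition osum (l : seq (option R)) := foldr (@eadd R) (Some 0) l.

Lemma osumE l : osum l = if all isSome l then Some (\sum_(x <- l) odflt 0 x) else None.
Proof.
elim: l => [|[a|] l IH] /=; first by rewrite big_nil.
  by rewrite IH big_cons; case: all.
by [].
Qed.

Lemma osum_perm l1 l2 : perm_eq l1 l2 -> osum l1 = osum l2.
Proof. by move=> H; rewrite !osumE (perm_all _ H) (perm_big _ H). Qed.

Lemma osum_cat l1 l2 : osum (l1 ++ l2) = eadd (osum l1) (osum l2).
Proof.
rewrite !osumE all_cat big_cat /=.
by case: (all isSome l1); case: (all isSome l2).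
Qed.

Lemma ele_refl u : ele u u.
Proof. by case: u => //= a; rewrite lexx. Qed.

Lemma ele_trans u v t : ele u v -> ele v t -> ele u t.
Proof. case: u; case: v; case: t => //= a b c; exact: le_trans. Qed.

Lemma ele_eadd u v u' v' : ele u u' -> ele v v' -> ele (eadd u v) (eadd u' v').
Proof. case: u; case: v; case: u'; case: v' => //= a b c e H1 H2; exact: lerD. Qed.

Lemma ele_osum (I : eqType) (s : seq I) (F G : I -> option R) :
  (forall x, x \in s -> ele (F x) (G x)) -> ele (osum (map F s)) (osum (map G s)).
Proof.
move=> H; elim: s H => [|x s IH] H /=; first by rewrite lexx.
apply: ele_eadd; first by apply: H; rewrite inE eqxx.
by apply: IH => y Hy; apply: H; rewrite inE Hy orbT.
Qed.

Lemma ele_emin_l u v t : ele u t -> ele (emin u v) t.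
Proof. case: u; case: v; case: t => //= a b c H; by rewrite ge_min H ?orbT. Qed.
Lemma ele_emin_r u v t : ele v t -> ele (emin u v) t.
Proof. case: u; case: v; case: t => //= a b c H; by rewrite ge_min H ?orbT. Qed.

Lemma ele_escale c u v : 0 <= c -> ele u v -> ele (escale c u) (escale c v).
Proof. case: u; case: v => //= a b c0 H; exact: ler_wpM2l. Qed.

Fixpoint emul (n : nat) u := if n is n'.+1 then eadd u (emul n' u) else Some 0.
End Opt.

Section Cont.
Variables (K : comNzRingType) (R : realFieldType) (d : nat) (w : 'I_d -> R).
Local Notation ord := (@ordT K R d w).

Lemma emul_val n (S : option R) : (0 < n)%N ->
  emul n S = if S is Some s then Some (s *+ n) else None.
Proof.
case: n => // n _; elim: n => [|n IH]; first by case: S => //= s; rewrite addr0.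
by rewrite -[emul n.+2 S]/(eadd S (emul n.+1 S)) IH; case: S {IH} => //= s; rewrite mulrS.
Qed.

Lemma escale_emul (a : nat) n (S : option R) : (0 < n)%N ->
  escale ((a * n)%:R^-1) (emul n S) = escale (a%:R^-1) S.
Proof.
move=> n0; rewrite emul_val //; case: S => //= s; congr Some.
have nz : (n%:R : R) != 0 by rewrite pnatr_eq0 -lt0n.
rewrite natrM invfM -mulr_natr -mulrA; congr (_ * _).
by rewrite -[s *+ n]mulr_natr mulrCA mulVf // mulr1.
Qed.

Lemma cont_row m (rf rg : seq (mps K d)) S : rf <> [::] ->
  (forall x, x \in rf -> osum [seq ord (x - y) | y <- rg] = S) ->
  cont w m rf rg = escale ((m * size rg)%:R^-1) S.
Proof.
move=> rf0 H; rewrite /cont.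
have -> : foldr (@eadd R) (Some 0) [seq ord (x - y) | x <- rf, y <- rg] = emul (size rf) S.
  elim: rf {rf0} H => [//|x rf IH] H.
  rewrite allpairs_cons -/(osum _) osum_cat H ?inE ?eqxx // [emul _ _]/=.
  by congr eadd; apply: IH => y Hy; apply: H; rewrite inE Hy orbT.
rewrite mulnAC escale_emul //.
by clear H; case: rf rf0.
Qed.

Lemma cont_col m (rf rg : seq (mps K d)) C : rg <> [::] ->
  (forall y, y \in rg -> osum [seq ord (x - y) | x <- rf] = C) ->
  cont w m rf rg = escale ((m * size rf)%:R^-1) C.
Proof.
move=> rg0 H; rewrite /cont.
have -> : foldr (@eadd R) (Some 0) [seq ord (x - y) | x <- rf, y <- rg] = emul (size rg) C.
  elim: rg {rg0} H => [|y rg IH] H.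
    by clear H; elim: rf.
  rewrite -/(osum _) (osum_perm (permEl (perm_allpairs_consr _ _ _ _))) osum_cat H ?inE ?eqxx //.
  by rewrite [emul _ _]/=; congr eadd; apply: IH => y' Hy; apply: H; rewrite inE Hy orbT.
by rewrite escale_emul //; clear H; case: rg rg0.
Qed.
End Cont.

Section Ultra.
Variables (K : comNzRingType) (R : realFieldType) (d : nat) (w : 'I_d -> R).
Hypothesis w_ge0 : forall i, 0 <= w i.
Local Notation ord := (@ordT K R d w).

Lemma ultra (x y : mps K d) : ele (emin (ord x) (ord y)) (ord (x + y)).
Proof.
case: (classic (x + y = 0)) => [->|nz]; first by rewrite ordT0; case: emin.
have [r [-> [[a [Ha <-]] _]]] := ordT_nz w_ge0 nz.
move: Ha; rewrite mcoefD => Ha.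
have [Hx|Hy] : mcoef x a != 0 \/ mcoef y a != 0.
  by case: (eqVneq (mcoef x a) 0) => Hx; [right; move: Ha; rewrite Hx add0r|left].
- have x0 : x <> 0 by move=> x0; move: Hx; rewrite x0 mcoef0 eqxx.
  have [rx [Ex [_ Hm]]] := ordT_nz w_ge0 x0.
  by apply: ele_emin_l; rewrite Ex /=; apply: Hm.
- have y0 : y <> 0 by move=> y0; move: Hy; rewrite y0 mcoef0 eqxx.
  have [ry [Ey [_ Hm]]] := ordT_nz w_ge0 y0.
  by apply: ele_emin_r; rewrite Ey /=; apply: Hm.
Qed.
End Ultra.

Lemma ele_total (R : realFieldType) (u v : option R) : ele u v \/ ele v u.
Proof. case: u; case: v => /=; auto => a b; case: (lerP a b); [right|left; apply: ltW]; auto. Qed.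

Lemma ele_emin_min (R : realFieldType) (u v : option R) : ele v u -> ele v (emin u v).
Proof. case: u; case: v => //= a b H; by rewrite le_min H lexx. Qed.
Lemma ele_emin_min' (R : realFieldType) (u v : option R) : ele u v -> ele u (emin u v).
Proof. case: u; case: v => //= a b H; by rewrite le_min H lexx. Qed.

Lemma ordT_sg (K : idomainType) (R : realFieldType) d (w : 'I_d -> R) (z : K) e (s : mps K d) :
  z != 0 -> ordT w (@sg K z d e s) = ordT w s.
Proof.
move=> z0; apply: ordT_supp => a; rewrite /sg mcoef_sgm mul1r mulf_eq0 negb_or.
by rewrite expf_neq0.
Qed.

Lemma list_max (T : eqType) (R : realFieldType) (s : seq T) (G : T -> option R) :
  s <> [::] -> exists2 x, x \in s & forall y, y \in s -> ele (G y) (G x).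
Proof.
elim: s => [//|a s IH] _; case: s IH => [|b s] IH.
  by exists a; rewrite ?inE // => y; rewrite inE => /eqP ->; apply: ele_refl.
have [c Hc Hm] := IH (fun H : b :: s = [::] => ltac:(discriminate H)).
case: (ele_total (G a) (G c)) => H.
  exists c; first by rewrite inE Hc orbT.
  by move=> y; rewrite inE => /orP [/eqP ->|/Hm].
exists a; first by rewrite inE eqxx.
by move=> y; rewrite inE => /orP [/eqP ->|/Hm Hy]; [apply: ele_refl|apply: ele_trans Hy H].
Qed.


Lemma prim_exists (K : closedFieldType) (Kc : [pchar K] =i pred0) n :
  (0 < n)%N -> exists z : K, n.-primitive_root z.
Proof.
move=> n_gt0; pose p : {poly K} := 'X^n - 1; have [r Dp] := closed_field_poly_normal p.
rewrite (monicP _) ?monicXnsubC // scale1r in Dp.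
have rn1: all n.-unity_root r by apply/allP=> z; rewrite -root_prod_XsubC -Dp.
have sz_r: (n < (size r).+1)%N.
  by rewrite -(size_prod_XsubC r id) -Dp size_XnsubC.
have [|z] := hasP (cyclic.has_prim_root n_gt0 rn1 _ sz_r); last by exists z.
rewrite -separable_prod_XsubC -Dp separable_Xn_sub_1 //.
by rewrite ((pcharf0P K).1 Kc n) -lt0n.
Qed.

Lemma roots_nonempty (K : idomainType) n d (F : {poly mps K d}) rF :
  poly_irreducible F -> map_poly (@ramf K n d) F = \prod_(a <- rF) ('X - a%:P) -> rF <> [::].
Proof.
move=> [Fnu _] Fs r0; apply: Fnu; exists 1; rewrite mulr1.
apply: (map_inj_poly (f := @ramf K n d)); first by move=> s t; apply: ram_inj.
  by rewrite raddf0.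
by rewrite Fs r0 big_nil rmorph1.
Qed.

Theorem mainTheorem8 (K : closedFieldType) (K_char0 : [pchar K] =i pred0)
    (d : nat) (f g h : {poly mps K d})
    (f_irr : poly_irreducible f) (g_irr : poly_irreducible g) (h_irr : poly_irreducible h)
    (f_qo : quasi_ordinary f) (g_qo : quasi_ordinary g) (h_qo : quasi_ordinary h)
    (R : realFieldType) (w : 'I_d -> R) (w_ge0 : forall i, 0 <= w i)
    (m : nat) (m_gt0 : (0 < m)%N) (rf rg rh : seq (mps K d))
    (f_split : splits_with m f rf) (g_split : splits_with m g rg)
    (h_split : splits_with m h rh) :
  ele (emin (cont w m rf rh) (cont w m rh rg)) (cont w m rf rg).
Proof.
have [z z_prim] := prim_exists K_char0 m_gt0.
case: m m_gt0 z_prim f_split g_split h_split => // n _ z_prim fs gs hs.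
have fs' : map_poly (@ramf K n d) f = \prod_(a <- rf) ('X - a%:P) := fs.
have gs' : map_poly (@ramf K n d) g = \prod_(a <- rg) ('X - a%:P) := gs.
have hs' : map_poly (@ramf K n d) h = \prod_(a <- rh) ('X - a%:P) := hs.
have z0 : z != 0.
  by apply/eqP => z0; have := prim_expr_order z_prim; rewrite z0 expr0n /= => /eqP; rewrite eq_sym oner_eq0.
pose ord := @ordT K R d w.
have rowI : forall (F : {poly mps K d}) rG, map_poly (@ramf K n d) F = \prod_(a <- rG) ('X - a%:P) ->
    forall e x, osum [seq ord (@sg K z d e x - y) | y <- rG] = osum [seq ord (x - y) | y <- rG].
  move=> F rG Fs e x.
  have P := perm_sg z_prim e Fs; rewrite perm_sym in P.
  rewrite (osum_perm (seq.perm_map _ P)) -map_comp.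
  congr osum; apply: eq_map => y /=.
  by rewrite -rmorphB /ord ordT_sg.
have colI : forall (F : {poly mps K d}) rG, map_poly (@ramf K n d) F = \prod_(a <- rG) ('X - a%:P) ->
    forall e y, osum [seq ord (x - @sg K z d e y) | x <- rG] = osum [seq ord (x - y) | x <- rG].
  move=> F rG Fs e y.
  have P := perm_sg z_prim e Fs; rewrite perm_sym in P.
  rewrite (osum_perm (seq.perm_map _ P)) -map_comp.
  congr osum; apply: eq_map => x /=.
  by rewrite -rmorphB /ord ordT_sg.
have rf0 := roots_nonempty f_irr fs'.
have rg0 := roots_nonempty g_irr gs'.
have rh0 := roots_nonempty h_irr hs'.
pose rowS (rG : seq (mps K d)) x := osum [seq ord (x - y) | y <- rG].
pose colS (rF : seq (mps K d)) y := osum [seq ord (x - y) | x <- rF].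
have cf := const_on z_prim f_irr fs' (phi := rowS rg) (rowI _ _ gs').
have chg := const_on z_prim h_irr hs' (phi := rowS rg) (rowI _ _ gs').
have cg := const_on z_prim g_irr gs' (phi := colS rf) (colI _ _ fs').
have chf := const_on z_prim h_irr hs' (phi := colS rf) (colI _ _ fs').
have ex_mem : forall s : seq (mps K d), s <> [::] -> exists a, a \in s.
  by move=> [//|a s] _; exists a; rewrite mem_head.
have [a1 Ha1] := ex_mem _ rf0.
have [b1 Hb1] := ex_mem _ rg0.
have [c1 Hc1] := ex_mem _ rh0.
have ne1 : [seq (x, y) | x <- rf, y <- rh] <> [::].
  by move=> H; have := allpairs_f (fun x y => (x, y)) Ha1 Hc1; rewrite H.
have ne2 : [seq (x, y) | x <- rh, y <- rg] <> [::].
  by move=> H; have := allpairs_f (fun x y => (x, y)) Hc1 Hb1; rewrite H.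
have [[a0 c0] Hp0 Hm1] := list_max (fun p : mps K d * mps K d => ord (p.1 - p.2)) ne1.
have [[c2 b2] Hp2 Hm2] := list_max (fun p : mps K d * mps K d => ord (p.1 - p.2)) ne2.
case/allpairsP: Hp0 => -[x y] [/= Ha0 Hc0 [E1 E2]]; subst x y.
case/allpairsP: Hp2 => -[x y] [/= Hc2 Hb2 [E1 E2]]; subst x y.
have c_ge0 : forall k : nat, 0 <= (k%:R : R)^-1 by move=> k; rewrite invr_ge0 ler0n.
case: (ele_total (ord (c2 - b2)) (ord (a0 - c0))) => H.
- rewrite (@cont_row _ _ _ w n.+1 rf rg (rowS rg a0) rf0); last by move=> x Hx; apply: cf.
  rewrite (@cont_row _ _ _ w n.+1 rh rg (rowS rg c0) rh0); last by move=> x Hx; apply: chg.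
  apply: ele_emin_r; apply: ele_escale => //; apply: ele_osum => y Hy.
  have U := ultra w_ge0 (a0 - c0) (c0 - y).
  rewrite addrA subrK in U; apply: ele_trans U; apply: ele_emin_min.
  apply: ele_trans H; apply: (Hm2 (c0, y)); exact: allpairs_f.
- rewrite (@cont_col _ _ _ w n.+1 rf rg (colS rf b2) rg0); last by move=> y Hy; apply: cg.
  rewrite (@cont_col _ _ _ w n.+1 rf rh (colS rf c2) rh0); last by move=> y Hy; apply: chf.
  apply: ele_emin_l; apply: ele_escale => //; apply: ele_osum => x Hx.
  have U := ultra w_ge0 (x - c2) (c2 - b2).
  rewrite addrA subrK in U; apply: ele_trans U; apply: ele_emin_min'.
  apply: ele_trans H; apply: (Hm1 (x, c2)); exact: allpairs_f.
Qed.
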